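(* Let $z$ be a nonzero element of $Z_{\mathrm{gr}}(E(\Lambda_{\mathbf{q}}))$ which is homogeneous both for the length grading and for the $\mathbb{Z}$-grading in which $a_i$ has degree $1$, $\bar a_i$ degree $-1$ and $e_i$ degree $0$. Then there are integers $s, t \geqslant 0$ with $s \equiv t \pmod m$ and $c_0 \in K^*$ such that $z = \sum_{i=0}^{m-1} c_i \gamma_i^{s}\delta_i^{t}$ where, for $i = 0, \ldots, m-1$, $$c_i = (-1)^{is}\prod_{k=1}^{i}(q_k\cdots q_{k+t-1})^{-1}c_0 = (-1)^{it}\prod_{k=1}^{i}(q_k\cdots q_{k+s-1})^{-1}c_0,$$ and moreover $\zeta^{s} = (-1)^{mt}$ and $\zeta^{t} = (-1)^{ms}$.
   Context: Let $K$ be a field, $m \geqslant 1$, $\mathcal{Q}$ the quiver with vertices $0, \ldots, m-1$ (indices modulo $m$), arrows $a_i: i\to i+1$, $\bar a_i: i+1\to i$, trivial paths $e_i$; paths written left to right. For $\mathbf{q}=(q_0,\dots,q_{m-1})\in(K^* )^m$, $\Lambda_{\mathbf{q}} = K\mathcal{Q}/I_{\mathbf{q}}$ with $I_{\mathbf{q}}$ generated by $a_ia_{i+1}$, $\bar a_{i-1}\bar a_{i-2}$, $q_ia_i\bar a_i - \bar a_{i-1}a_{i-1}$; $\zeta = q_0\cdots q_{m-1}$; indices of the $q_k$ are taken modulo $m$. $E(\Lambda_{\mathbf{q}}) = \operatorname{Ext}^*_{\Lambda_{\mathbf{q}}}(\Lambda_{\mathbf{q}}/\mathfrak{r}, \Lambda_{\mathbf{q}}/\mathfrak{r})$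 ($\mathfrak r$ the Jacobson radical) with Yoneda product; since $\Lambda_{\mathbf q}$ is Koszul, it is identified with $K\mathcal{Q}$ modulo the ideal generated by $q_i^{-1}a_i\bar a_i + \bar a_{i-1}a_{i-1}$, $i=0,\dots,m-1$, graded by path length (length $n$ corresponding to $\operatorname{Ext}^n$). Write $\gamma_i^n = a_ia_{i+1}\cdots a_{i+n-1}$ and $\delta_i^n = \bar a_{i+n-1}\cdots\bar a_{i+1}\bar a_i$ (paths of length $n$; $\gamma_i^0=\delta_i^0=e_i$). The graded centre $Z_{\mathrm{gr}}(E)$ is the subalgebra generated by homogeneous $z$ of length $n$ with $zg = (-1)^{nk}gz$ for all homogeneous $g$ of length $k$. *)

(* Defs.v *)
From HB Require Import structures.
From mathcomp Require Import all_boot all_order all_algebra.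
Set Implicit Arguments. Unset Strict Implicit. Unset Printing Implicit Defensive.
Import GRing.Theory.
Local Open Scope ring_scope.

(* A path is determined by its start
   vertex and the sequence of arrow directions: [true] = arrow a_v : v -> v+1,
   [false] = arrow abar_{v-1} : v -> v-1.  Paths are written left to right. *)
Definition path (m : nat) := ('I_m * seq bool)%type.

Definition vtx (m : nat) (hm : (0 < m)%N) (k : nat) : 'I_m :=
  Ordinal (ltn_pmod k hm).

Definition pend (m : nat) (p : path m) : 'I_m :=
  foldl (fun v (b : bool) => if b then ordS v else ord_pred v) p.1 p.2.

(* elements of the path algebra K Q, as formal linear combinations of paths *)
Definition kq (K : fieldType) (m : nat) := seq (K * path m).

Definition coefp (K : fieldType) (m : nat) (x : kq K m) (p : path m) : K :=
  \sum_(e <- x | e.2 == p) e.1.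

Definition mulx (K : fieldType) (m : nat) (x y : kq K m) : kq K m :=
  flatten [seq (if pend e.2 == f.2.1
                then [:: (e.1 * f.1, (e.2.1, e.2.2 ++ f.2.2))] else [::])
          | e <- x, f <- y].

Definition scalex (K : fieldType) (m : nat) (c : K) (x : kq K m) : kq K m :=
  [seq (c * e.1, e.2) | e <- x].

Definition subx (K : fieldType) (m : nat) (x y : kq K m) : kq K m :=
  x ++ scalex (-1) y.

(* generator q_i^{-1} a_i abar_i + abar_{i-1} a_{i-1} of the ideal of E *)
Definition relE (K : fieldType) (m : nat) (q : 'I_m -> K) (i : 'I_m) : kq K m :=
  [:: ((q i)^-1, (i, [:: true; false])); (1, (i, [:: false; true]))].

(* membership in the two-sided ideal generated by the relE i:
   x is (coefficientwise) a finite sum of  c * u * relE r * v  with u, v paths *)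
Definition inI (K : fieldType) (m : nat) (q : 'I_m -> K) (x : kq K m) : Prop :=
  exists l : seq (K * path m * 'I_m * path m),
    forall p, coefp x p =
      coefp (flatten [seq mulx (mulx [:: (g.1.1.1, g.1.1.2)] (relE q g.1.2))
                               [:: (1, g.2)] | g <- l]) p.

Definition eq_in_E (K : fieldType) (m : nat) (q : 'I_m -> K) (x y : kq K m) : Prop :=
  inI q (subx x y).

Definition len_homog (K : fieldType) (m : nat) (n : nat) (x : kq K m) : bool :=
  all (fun e => size e.2.2 == n) x.

Definition zdeg (w : seq bool) : int := (count id w)%:Z - (count negb w)%:Z.

Definition zhomog (K : fieldType) (m : nat) (d : int) (x : kq K m) : bool :=
  all (fun e => zdeg e.2.2 == d) x.

Definition graded_central (K : fieldType) (m : nat) (q : 'I_m -> K)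
    (n : nat) (x : kq K m) : Prop :=
  forall (k : nat) (y : kq K m), len_homog k y ->
    eq_in_E q (mulx x y) (scalex ((-1) ^+ (n * k)) (mulx y x)).

Definition qq (K : fieldType) (m : nat) (hm : (0 < m)%N) (q : 'I_m -> K) (k : nat) : K :=
  q (vtx hm k).

Definition zeta (K : fieldType) (m : nat) (q : 'I_m -> K) : K := \prod_(i < m) q i.

(* gamma_i^s = a_i a_{i+1} ... a_{i+s-1} *)
Definition gam (K : fieldType) (m : nat) (hm : (0 < m)%N) (i s : nat) : kq K m :=
  [:: (1, (vtx hm i, nseq s true))].

(* delta_i^t = abar_{i+t-1} ... abar_i  (a path from i+t to i) *)
Definition del (K : fieldType) (m : nat) (hm : (0 < m)%N) (i t : nat) : kq K m :=
  [:: (1, (vtx hm (i + t), nseq t false))].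

Definition coef_c (K : fieldType) (m : nat) (hm : (0 < m)%N) (q : 'I_m -> K)
    (s t : nat) (c0 : K) (i : nat) : K :=
  (-1) ^+ (i * s) * \prod_(1 <= k < i.+1) (\prod_(k <= j < k + t) qq hm q j)^-1 * c0.

(* Main.v *)
Require Import Defs.
From Stdlib Require Import Lia.
From HB Require Import structures.
From mathcomp Require Import all_boot all_order all_algebra.
Set Implicit Arguments. Unset Strict Implicit. Unset Printing Implicit Defensive.
Import GRing.Theory.
Local Open Scope ring_scope.

Section Lin.
Variables (K : fieldType) (m : nat) (q : 'I_m -> K).

Definition L (G : Defs.path m -> K) (x : kq K m) : K := \sum_(e <- x) e.1 * G e.2.

Lemma L_nil G : L G [::] = 0. Proof. by rewrite /L big_nil. Qed.
Lemma L_cons G e x : L G (e :: x) = e.1 * G e.2 + L G x.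
Proof. by rewrite /L big_cons. Qed.
Lemma L_cat G x y : L G (x ++ y) = L G x + L G y.
Proof. by rewrite /L big_cat. Qed.
Lemma L_scale G c x : L G (scalex c x) = c * L G x.
Proof. rewrite /L /scalex big_map mulr_sumr; apply: eq_bigr => e _ /=; by rewrite mulrA. Qed.
Lemma L_sub G x y : L G (subx x y) = L G x - L G y.
Proof. by rewrite /subx L_cat L_scale mulN1r. Qed.
Lemma L_flatten G (T : Type) (f : T -> kq K m) (l : seq T) :
  L G (flatten (map f l)) = \sum_(g <- l) L G (f g).
Proof. by elim: l => [|a l IH] /=; rewrite ?big_nil ?L_nil // L_cat IH big_cons. Qed.
Lemma L_flat G (ss : seq (kq K m)) : L G (flatten ss) = \sum_(s <- ss) L G s.
Proof. by elim: ss => [|a l IH] /=; rewrite ?big_nil ?L_nil // L_cat IH big_cons. Qed.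
Lemma L_mulx G x y : L G (mulx x y) =
  \sum_(e <- x) \sum_(f <- y) e.1 * f.1 *
     (if pend e.2 == f.2.1 then G (e.2.1, e.2.2 ++ f.2.2) else 0).
Proof.
rewrite /mulx L_flat big_flatten /= big_map; apply: eq_bigr => e _.
rewrite big_map; apply: eq_bigr => f _.
by case: ifP => _; rewrite ?L_nil ?mulr0 // L_cons L_nil addr0.
Qed.
Lemma L_mulx1 G x y : L G (mulx x [:: y]) =
  L (fun u => y.1 * if pend u == y.2.1 then G (u.1, u.2 ++ y.2.2) else 0) x.
Proof.
rewrite L_mulx; apply: eq_bigr => e _; rewrite big_cons big_nil addr0.
by rewrite mulrA [_ * y.1]mulrC -mulrA.
Qed.
Lemma L_1mulx G y x : L G (mulx [:: y] x) =
  y.1 * L (fun u => if pend y.2 == u.1 then G (y.2.1, y.2.2 ++ u.2) else 0) x.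
Proof.
rewrite L_mulx big_cons big_nil addr0 mulr_sumr; apply: eq_bigr => f _.
by rewrite mulrA.
Qed.

Lemma coefpL x p : Defs.coefp x p = L (fun u => (u == p)%:R) x.
Proof.
rewrite /Defs.coefp /L big_mkcond; apply: eq_bigr => e _.
by case: eqP => _; rewrite ?mulr1 ?mulr0.
Qed.

Lemma L_supp G x (S : seq (Defs.path m)) : uniq S -> {subset map snd x <= S} ->
  L G x = \sum_(p <- S) Defs.coefp x p * G p.
Proof.
move=> uS; elim: x => [|e x IH] sub.
  by rewrite L_nil big1 // => p _; rewrite coefpL L_nil mul0r.
rewrite L_cons IH; last by move=> p hp; apply: sub; rewrite /= inE hp orbT.
have eS : e.2 \in S by apply: sub; rewrite /= inE eqxx.
under [in RHS]eq_bigr => p _ do rewrite coefpL L_cons -coefpL mulrDl.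
rewrite big_split /=; congr (_ + _).
rewrite (bigD1_seq e.2) //= eqxx mulr1 big1 ?addr0 // => p /negbTE.
by rewrite eq_sym => ->; rewrite mulr0 mul0r.
Qed.

Lemma lin_ext G x y : (forall p, Defs.coefp x p = Defs.coefp y p) -> L G x = L G y.
Proof.
move=> h; set S := undup (map snd (x ++ y)).
have uS : uniq S by apply: undup_uniq.
rewrite (@L_supp G x S) // ?(@L_supp G y S) //.
- by apply: eq_bigr => p _; rewrite h.
- by move=> p hp; rewrite mem_undup map_cat mem_cat hp orbT.
- by move=> p hp; rewrite mem_undup map_cat mem_cat hp.
Qed.

Definition Leq x y := forall G, L G x = L G y.

Definition gen (g : K * Defs.path m * 'I_m * Defs.path m) : kq K m :=
  mulx (mulx [:: (g.1.1.1, g.1.1.2)] (relE q g.1.2)) [:: (1, g.2)].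
Definition gens l := flatten [seq gen g | g <- l].

Lemma inIE x : inI q x <-> exists l, Leq x (gens l).
Proof.
split=> [[l hl]|[l hl]]; exists l.
  by move=> G; apply: lin_ext.
by move=> p; rewrite !coefpL hl.
Qed.

Lemma inI_Leq x y : Leq x y -> inI q y -> inI q x.
Proof. by move=> h /inIE [l hl]; apply/inIE; exists l => G; rewrite h hl. Qed.

Lemma inI_nil : inI q [::].
Proof. by apply/inIE; exists [::] => G; rewrite /gens /= L_nil. Qed.

Lemma inI_cat x y : inI q x -> inI q y -> inI q (x ++ y).
Proof.
move=> /inIE [l1 h1] /inIE [l2 h2]; apply/inIE; exists (l1 ++ l2) => G.
by rewrite L_cat h1 h2 /gens map_cat flatten_cat L_cat.
Qed.

Lemma pend_cat (v : 'I_m) w1 w2 : pend (v, w1 ++ w2) = pend (pend (v, w1), w2).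
Proof. by rewrite /pend /= foldl_cat. Qed.
Lemma pend_TF (v : 'I_m) w : pend (v, [:: true, false & w]) = pend (v, w).
Proof. by rewrite /pend /= ordSK. Qed.
Lemma pend_FT (v : 'I_m) w : pend (v, [:: false, true & w]) = pend (v, w).
Proof. by rewrite /pend /= ord_predK. Qed.
Lemma pend_nil (v : 'I_m) : pend (v, [::]) = v.
Proof. by []. Qed.

Lemma L_gen G a u r w : L G (gen (a, u, r, w)) =
  a * ((if pend u == r then 1 else 0) *
       ((if pend u == w.1 then 1 else 0) *
        ((q r)^-1 * G (u.1, u.2 ++ [:: true, false & w.2]) +
         G (u.1, u.2 ++ [:: false, true & w.2])))).
Proof.
case: u => u1 u2.
rewrite /gen L_mulx1 L_1mulx /= !L_cons L_nil /= addr0.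
rewrite !pend_cat pend_TF pend_FT pend_nil -!catA /=.
case: (pend (u1, u2) == r); case: (pend (u1, u2) == w.1);
  rewrite ?mul1r ?mul0r ?mulr0 ?addr0 ?mulr1 //; apply: mulr0.
Qed.

Lemma inI_gen g : inI q (gen g).
Proof. by apply/inIE; exists [:: g] => G; rewrite /gens /= cats0. Qed.

Lemma inI_scale c x : inI q x -> inI q (scalex c x).
Proof.
move=> /inIE [l hl]; apply/inIE.
exists [seq (c * g.1.1.1, g.1.1.2, g.1.2, g.2) | g <- l] => G.
rewrite L_scale hl /gens !L_flatten big_map mulr_sumr; apply: eq_bigr => [[[[a u] r] w]] _ /=.
by rewrite !L_gen mulrA.
Qed.

Lemma inI_mulr x w : inI q x -> inI q (mulx x [:: (1, w)]).
Proof.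
move=> /inIE [l hl]; apply/inIE.
exists [seq (if pend g.2 == w.1 then g.1.1.1 else 0, g.1.1.2, g.1.2,
             (g.2.1, g.2.2 ++ w.2)) | g <- l] => G.
rewrite L_mulx1 hl /gens !L_flatten big_map; apply: eq_bigr => [[[[a u] r] [w1 w2]]] _ /=.
rewrite !L_gen /=; case: u => u1 u2 /=.
case E1: (pend (u1, u2) == r); rewrite ?mul0r ?mulr0 //.
case E2: (pend (u1, u2) == w1); rewrite ?mul0r ?mulr0 //.
rewrite !mul1r !pend_cat pend_TF pend_FT (eqP E2) -!catA /=.
by case: ifP => _; rewrite ?mul1r ?mulr0 ?mul0r ?add0r ?mulr0.
Qed.

Definition eqE x y := inI q (subx x y).

Lemma eqE_Leq x y x' y' : Leq x x' -> Leq y y' -> eqE x' y' -> eqE x y.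
Proof. move=> h1 h2; apply: inI_Leq => G; by rewrite !L_sub h1 h2. Qed.

Lemma eqE_refl x : eqE x x.
Proof. apply: (inI_Leq _ inI_nil) => G; by rewrite L_sub subrr L_nil. Qed.

Lemma eqE_trans y x z : eqE x y -> eqE y z -> eqE x z.
Proof.
move=> h1 h2; apply: (inI_Leq _ (inI_cat h1 h2)) => G.
by rewrite L_cat !L_sub addrA subrK.
Qed.

Lemma eqE_scale c x y : eqE x y -> eqE (scalex c x) (scalex c y).
Proof.
move=> h; apply: (inI_Leq _ (inI_scale c h)) => G.
by rewrite !L_sub !L_scale L_sub mulrBr.
Qed.

Lemma eqE_mulr w x y : eqE x y -> eqE (mulx x [:: (1, w)]) (mulx y [:: (1, w)]).
Proof.
move=> h; apply: (inI_Leq _ (inI_mulr w h)) => G.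
by rewrite L_sub !L_mulx1 L_sub.
Qed.

Lemma eqE_cat x y x' y' : eqE x x' -> eqE y y' -> eqE (x ++ y) (x' ++ y').
Proof.
move=> h1 h2; apply: (inI_Leq _ (inI_cat h1 h2)) => G.
rewrite /subx !L_cat !L_scale !L_cat !mulN1r opprD !addrA; congr (_ + _); rewrite -!addrA; congr (_ + _); exact: addrC.
Qed.

End Lin.

Section NF.
Variables (K : fieldType) (m : nat) (hm : (0 < m)%N) (q : 'I_m -> K).
Hypothesis hq : forall i, q i != 0.

Local Notation qq := (qq hm q).

Lemma qq_mod a b : a = b %[mod m] -> qq a = qq b.
Proof. by move=> h; rewrite /Defs.qq; congr q; apply: val_inj; rewrite /= h. Qed.
Lemma qq_ord (v : 'I_m) : qq v = q v.
Proof. by rewrite /Defs.qq; congr q; apply: val_inj; rewrite /= modn_small. Qed.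
Lemma qq_neq0 a : qq a != 0.
Proof. exact: hq. Qed.

Definition P (e : 'I_m) t := \prod_(1 <= j < t.+1) (- (qq (e + j))^-1).
Definition Q (B : nat) n := \prod_(0 <= k < n) (- (qq (B + k))^-1).

Definition step (st : K * 'I_m * nat) (b : bool) : K * 'I_m * nat :=
  if b then (st.1.1 * P st.1.2 st.2, ordS st.1.2, st.2)
  else (st.1.1, ord_pred st.1.2, st.2.+1).

Definition fld c e t w := foldl step (c, e, t) w.
Definition f1 e t w := (fld 1 e t w).1.1.
Definition phi (p : Defs.path m) := f1 p.1 0 p.2.

Lemma foldl_scale w (st : K * 'I_m * nat) :
  foldl step st w = ((foldl step (1, st.1.2, st.2) w).1.1 * st.1.1,
     (foldl step (1, st.1.2, st.2) w).1.2, (foldl step (1, st.1.2, st.2) w).2).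
Proof.
elim: w st => [|b w IH] [[c e] t] /=; first by rewrite mul1r.
rewrite IH [in RHS]IH /=; case: b => /=; last by rewrite mulr1.
by rewrite mul1r -mulrA [P e t * c]mulrC.
Qed.

Lemma fld_scale c e t w :
  fld c e t w = ((fld 1 e t w).1.1 * c, (fld 1 e t w).1.2, (fld 1 e t w).2).
Proof. exact: foldl_scale. Qed.

Lemma fld_end c e t w : (fld c e t w).1.2 = pend (e, w) /\ (fld c e t w).2 = (t + count negb w)%N.
Proof.
rewrite /fld /pend /=; elim: w c e t => [|b w IH] c e t /=; first by rewrite addn0.
case: b.
  by have [h1 h2] := IH (c * P e t) (ordS e) t; split; [exact: h1|exact: h2].
have [h1 h2] := IH c (ord_pred e) t.+1; split; [exact: h1|by rewrite h2 addnS].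
Qed.

Lemma P0 e : P e 0 = 1.
Proof. by rewrite /P big_geq. Qed.

Lemma ord_pred_mod (e : 'I_m) j : (ord_pred e + j.+1 = e + j %[mod m])%N.
Proof.
rewrite /= modnDml.
have -> : ((e + m).-1 + j.+1 = (e + j) + m)%N.
  by rewrite addnS -addSn prednK ?addn_gt0 ?hm ?orbT // addnAC.
by rewrite modnDr.
Qed.

Lemma ordS_mod (e : 'I_m) j : (ordS e + j = e + j.+1 %[mod m])%N.
Proof. by rewrite /= modnDml addSn addnS. Qed.

Lemma qq_predS (e : 'I_m) j : qq (ord_pred e + j.+1) = qq (e + j).
Proof. exact/qq_mod/ord_pred_mod. Qed.

Lemma qq_S (e : 'I_m) j : qq (ordS e + j) = qq (e + j.+1).
Proof. exact/qq_mod/ordS_mod. Qed.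

Lemma P_pred e t : P (ord_pred e) t.+1 = - (q e)^-1 * P e t.
Proof.
rewrite /P big_nat_recl // qq_predS addn0 qq_ord; congr (_ * _).
by apply: eq_bigr => j _; rewrite qq_predS.
Qed.

Lemma P_S e t : P e t.+1 = P e t * - (qq (e + t.+1))^-1.
Proof. by rewrite /P big_nat_recr. Qed.

Lemma Q_S B n : Q B n.+1 = - (qq B)^-1 * Q B.+1 n.
Proof.
rewrite /Q big_nat_recl // addn0; congr (_ * _).
by apply: eq_bigr => k _; rewrite addSnnS.
Qed.

Lemma f1_F (e : 'I_m) t w B : B = (e + t.+1)%N %[mod m] ->
  f1 e t.+1 w = f1 e t w * Q B (count id w).
Proof.
rewrite /f1 /fld; elim: w e t B => [|b w IH] e t B hB /=.
  by rewrite /Q big_geq // mulr1.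
case: b => /=.
  rewrite foldl_scale [in RHS]foldl_scale /= !mul1r.
  rewrite (IH (ordS e) t B.+1); last first.
    by rewrite -addn1 -modnDml hB modnDml addn1 -addnS -ordS_mod.
  rewrite Q_S P_S (qq_mod (esym hB)) -!mulrA; congr (_ * _).
  by rewrite mulrC -mulrA; congr (_ * _); rewrite mulrC.
apply: IH; rewrite hB; apply/esym.
exact: ord_pred_mod.
Qed.

Lemma phi_T (j : 'I_m) w : phi (j, true :: w) = phi (ordS j, w).
Proof.
rewrite /phi /f1 /fld /= foldl_scale /= P0 mul1r mulr1.
by rewrite [in RHS]foldl_scale /= mulr1.
Qed.

Lemma phi_F (j : 'I_m) w : phi (j, false :: w) = phi (ord_pred j, w) * Q j (count id w).
Proof.
have hB : (j : nat) = (ord_pred j + 1)%N %[mod m] by rewrite ord_pred_mod addn0.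
rewrite /phi /= -(f1_F w hB).
by rewrite /f1 /fld /= [in LHS]foldl_scale [in RHS]foldl_scale /=.
Qed.

Lemma phi_rcons_T (v : 'I_m) w : phi (v, rcons w true) = phi (v, w) * P (pend (v, w)) (count negb w).
Proof.
rewrite /phi /f1 /fld /= foldl_rcons /=.
have [h1 h2] := fld_end 1 v 0 w; rewrite /fld in h1 h2.
by rewrite h1 h2.
Qed.

Lemma phi_rcons_F (v : 'I_m) w : phi (v, rcons w false) = phi (v, w).
Proof. by rewrite /phi /f1 /fld /= foldl_rcons. Qed.

Lemma phi_rel (v : 'I_m) u w :
  phi (v, u ++ [:: false, true & w]) = - (q (pend (v, u)))^-1 * phi (v, u ++ [:: true, false & w]).
Proof.
rewrite /phi /f1 /fld /= !foldl_cat.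
have [h1 h2] := fld_end 1 v 0 u; rewrite /fld in h1 h2.
case E: (foldl step (1, v, 0%N) u) h1 h2 => [[c e] t] /= h1 h2.
rewrite -h1 /= foldl_scale [in RHS]foldl_scale /= ord_predK ordSK P_pred.
by rewrite [c * (_ * _)]mulrCA; exact: mulrCA.
Qed.

Definition Gphi (v : 'I_m) s t (p : Defs.path m) :=
  if (p.1 == v) && (count id p.2 == s) && (count negb p.2 == t) then phi p else 0.

Lemma Phi_gen v s t g : L (Gphi v s t) (gen q g) = 0.
Proof.
case: g => [[[a [u1 u2]] r] w]; rewrite L_gen /=.
case: eqP => [<-|_]; last by rewrite !(mul0r, mulr0).
case: (_ == w.1); last by rewrite !(mul0r, mulr0).
rewrite /Gphi /= !count_cat /= phi_rel !add0n.
case: ifP => _ /=; last by rewrite mulr0 addr0 !mulr0.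
by rewrite -mulrDl subrr mul0r !mulr0.
Qed.

Lemma Phi_inI v s t x : inI q x -> L (Gphi v s t) x = 0.
Proof.
move=> /inIE [l ->]; rewrite /gens L_flatten big1 // => g _; exact: Phi_gen.
Qed.

Lemma Phi_eqE v s t x y : eqE q x y -> L (Gphi v s t) x = L (Gphi v s t) y.
Proof. by move=> /(Phi_inI v s t); rewrite L_sub => /eqP; rewrite subr_eq0 => /eqP. Qed.

End NF.

Lemma iter_comm (T : Type) (f g : T -> T) n x :
  (forall y, f (g y) = g (f y)) -> iter n f (g x) = g (iter n f x).
Proof. by move=> h; elim: n => //= n ->. Qed.

Lemma ordS_pred_comm m (y : 'I_m) : ordS (ord_pred y) = ord_pred (ordS y).
Proof. by rewrite ord_predK ordSK. Qed.

Definition endv m (v : 'I_m) s t := iter s (@ordS m) (iter t (@ord_pred m) v).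

Lemma pend_counts m (v : 'I_m) w : pend (v, w) = endv v (count id w) (count negb w).
Proof.
rewrite /pend /endv /=; elim: w v => [|b w IH] v //=.
rewrite IH; case: b => /=; rewrite ?add0n ?add1n.
  rewrite (iter_comm _ _ (fun y => esym (ordS_pred_comm y))).
  by rewrite (@iter_comm _ (@ordS m) (@ordS m) _ _ (fun y => erefl)).
by rewrite (@iter_comm _ (@ord_pred m) (@ord_pred m) _ _ (fun y => erefl)).
Qed.

Lemma pend_eq_counts m (v : 'I_m) w w' : count id w = count id w' ->
  count negb w = count negb w' -> pend (v, w) = pend (v, w').
Proof. by move=> h1 h2; rewrite !pend_counts h1 h2. Qed.

Definition nfw s t := nseq s true ++ nseq t false.
Lemma count_nfw s t : count id (nfw s t) = s /\ count negb (nfw s t) = t.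
Proof. by rewrite /nfw !count_cat !count_nseq /= mul1n mul0n add0n addn0 mul1n. Qed.
Lemma pend_nfw m (v : 'I_m) s t : pend (v, nfw s t) = endv v s t.
Proof. by have [h1 h2] := count_nfw s t; rewrite pend_counts h1 h2. Qed.
Lemma nfwF s t : nfw s t ++ [:: false] = nfw s t.+1.
Proof. by rewrite /nfw -catA -[t.+1]addn1 nseqD. Qed.
Lemma nfwT s : nfw s 0 ++ [:: true] = nfw s.+1 0.
Proof. by rewrite /nfw !cats0 -[s.+1]addn1 nseqD. Qed.

Lemma mulx11 (K : fieldType) m (a b : K) (v x : 'I_m) w w' : pend (v, w) = x ->
  mulx [:: (a, (v, w))] [:: (b, (x, w'))] = [:: (a * b, (v, w ++ w'))].
Proof. by move=> h; rewrite /mulx /= h eqxx. Qed.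

Section NFred.
Variables (K : fieldType) (m : nat) (hm : (0 < m)%N) (q : 'I_m -> K).

Lemma Leq1 (a b : K) (p p' : Defs.path m) : a = b -> p = p' -> Leq [:: (a, p)] [:: (b, p')].
Proof. by move=> -> ->. Qed.

Lemma Tstep (v : 'I_m) s t :
  eqE q [:: (1, (v, nfw s t ++ [:: true]))] [:: (P hm q (endv v s t) t, (v, nfw s.+1 t))].
Proof.
elim: t => [|t IH].
  by rewrite nfwT P0; apply: eqE_refl.
set u2 := nfw s t; set r := endv v s t.
have e1 : nfw s t.+1 ++ [:: true] = u2 ++ [:: false; true] by rewrite -nfwF -catA.
have st1 : eqE q [:: (1, (v, u2 ++ [:: false; true]))] [:: (- (q r)^-1, (v, u2 ++ [:: true; false]))].
  apply: (inI_Leq _ (inI_gen q (1, (v, u2), r, (r, [::])))) => G.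
  rewrite L_gen /= pend_nfw eqxx L_sub !L_cons !L_nil /=.
  by rewrite !mul1r !addr0 mulNr opprK addrC.
have st2 := eqE_mulr (pend (v, u2 ++ [:: true]), [:: false]) IH.
have h : pend (v, nfw s.+1 t) = pend (v, u2 ++ [:: true]).
  apply: pend_eq_counts; have [h1 h2] := count_nfw s.+1 t;
  by rewrite /u2 ?h1 ?h2 count_cat /= ?(count_nfw s t).1 ?(count_nfw s t).2 ?addn1 ?addn0.
rewrite (mulx11 1 1 [:: false] (erefl (pend (v, u2 ++ [:: true])))) (mulx11 _ 1 [:: false] h) in st2.
have st2' : eqE q [:: (- (q r)^-1, (v, u2 ++ [:: true; false]))]
    [:: (- (q r)^-1 * P hm q r t, (v, nfw s.+1 t.+1))].
  apply: (eqE_Leq _ _ (eqE_scale (- (q r)^-1) st2)); rewrite /scalex /=; apply: Leq1.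
  - by rewrite !mulr1.
  - by rewrite -catA.
  - by rewrite mulr1.
  - by rewrite nfwF.
rewrite e1; apply: (eqE_trans st1); apply: (eqE_Leq _ _ st2'); apply: Leq1 => //.
have -> : endv v s t.+1 = ord_pred r.
  by rewrite -pend_nfw -nfwF pend_cat pend_nfw.
by rewrite P_pred.
Qed.

Lemma nf_path (v : 'I_m) w :
  eqE q [:: (1, (v, w))] [:: (phi hm q (v, w), (v, nfw (count id w) (count negb w)))].
Proof.
elim/last_ind: w => [|w b IH].
  by rewrite /phi /f1 /fld /=; apply: eqE_refl.
have st := eqE_mulr (pend (v, w), [:: b]) IH.
have h : pend (v, nfw (count id w) (count negb w)) = pend (v, w).
  by rewrite pend_nfw pend_counts.
rewrite (mulx11 1 1 [:: b] (erefl (pend (v, w)))) (mulx11 _ 1 [:: b] h) cats1 mulr1 in st.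
rewrite -cats1 !count_cat cats1 /=; case: b st => /= st; rewrite ?add0n ?addn0 ?addn1.
  rewrite phi_rcons_T.
  apply: (eqE_trans st); apply: (eqE_Leq _ _ (eqE_scale (phi hm q (v, w)) (Tstep _ _ _))).
    by rewrite /scalex /=; apply: Leq1; rewrite ?mulr1.
  by rewrite /scalex /= pend_counts.
by rewrite phi_rcons_F -nfwF -[phi _ _ _]mulr1.
Qed.

Definition NF (x : kq K m) : kq K m :=
  [seq (e.1 * phi hm q e.2, (e.2.1, nfw (count id e.2.2) (count negb e.2.2))) | e <- x].

Lemma nf_list x : eqE q x (NF x).
Proof.
elim: x => [|e x IH]; first exact: eqE_refl.
have h := eqE_cat (eqE_scale e.1 (nf_path e.2.1 e.2.2)) IH.
apply: (eqE_Leq _ _ h) => G; rewrite /scalex /= !L_cons //.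
by case: e {h} => a [v w] /=; rewrite mulr1.
Qed.

End NFred.

Lemma L_eq_in (K : fieldType) m (G1 G2 : Defs.path m -> K) (x : kq K m) :
  (forall e, e \in x -> G1 e.2 = G2 e.2) -> L G1 x = L G2 x.
Proof.
by move=> h; rewrite /L [LHS]big_seq [RHS]big_seq; apply: eq_bigr => e /h ->.
Qed.

Lemma L_scal (K : fieldType) m (k : K) (H : Defs.path m -> K) x :
  L (fun u => k * H u) x = k * L H x.
Proof. by rewrite /L mulr_sumr; apply: eq_bigr => e _; rewrite mulrCA. Qed.

Lemma sign_sq (K : fieldType) n : (-1) ^+ n * (-1) ^+ n = 1 :> K.
Proof. by rewrite -exprD addnn -mul2n exprM sqrrN expr1n expr1n. Qed.

Section Cent.
Variables (K : fieldType) (m : nat) (hm : (0 < m)%N) (q : 'I_m -> K).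
Variables (z : kq K m) (s t : nat).
Hypothesis hst : forall e, e \in z -> count id e.2.2 = s /\ count negb e.2.2 = t.

Local Notation Gp := (Gphi hm q).
Definition cc v := L (Gp v s t) z.

Lemma E1 v j : L (Gp v s t) (mulx z [:: (1, (j, [::]))]) =
  (if endv v s t == j then 1 else 0) * cc v.
Proof.
rewrite L_mulx1 /cc -L_scal; apply: L_eq_in => [[a [u1 u2]]] /hst /= [c1 c2].
rewrite /Gphi /= cats0 c1 c2 !eqxx !andbT mul1r.
case: (u1 =P v) => [->|_]; last by case: ifP; rewrite ?mulr0.
by rewrite pend_counts c1 c2; case: ifP; rewrite ?mul1r ?mul0r.
Qed.

Lemma E2 v j : L (Gp v s t) (mulx [:: (1, (j, [::]))] z) =
  (if j == v then 1 else 0) * cc v.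
Proof.
rewrite L_1mulx mul1r /cc -L_scal; apply: L_eq_in => [[a [u1 u2]]] _ /=.
rewrite /Gphi /= pend_nil.
case: (j =P u1) => [<-|nju]; first by case: ifP; case: (j == v); rewrite ?mul1r ?mul0r //=.
case: (u1 =P v) => [<-|_] /=; last by rewrite mulr0.
by case: (j =P u1) nju => // _ _; rewrite mul0r.
Qed.

Lemma E3 v j : L (Gp v s.+1 t) (mulx z [:: (1, (j, [:: true]))]) =
  (if endv v s t == j then P hm q j t else 0) * cc v.
Proof.
rewrite L_mulx1 /cc -L_scal; apply: L_eq_in => [[a [u1 u2]]] /hst /= [c1 c2].
rewrite /Gphi /= !count_cat /= c1 c2 addn1 addn0 !eqxx !andbT mul1r cats1.
case: (u1 =P v) => [->|_]; last by case: ifP; rewrite ?mulr0.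
rewrite pend_counts c1 c2 phi_rcons_T pend_counts c1 c2.
by rewrite addn0 eqxx /=; case: eqP => [->|_]; rewrite ?mul0r // mulrC.
Qed.

Lemma E4 v j : L (Gp v s.+1 t) (mulx [:: (1, (j, [:: true]))] z) =
  (if j == v then 1 else 0) * cc (ordS j).
Proof.
rewrite L_1mulx mul1r /cc -L_scal; apply: L_eq_in => [[a [u1 u2]]] _ /=.
rewrite /Gphi /= add1n eqSS.
have -> : pend (j, [:: true]) = ordS j by [].
case: (ordS j =P u1) => [<-|nju].
  by rewrite phi_T eqxx; case: (j == v); rewrite ?mul1r ?mul0r.
case: (u1 =P ordS j) => [e|_] /=; first by case: nju.
by rewrite mulr0.
Qed.

Lemma E5 v j : L (Gp v s t.+1) (mulx z [:: (1, (j, [:: false]))]) =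
  (if endv v s t == j then 1 else 0) * cc v.
Proof.
rewrite L_mulx1 /cc -L_scal; apply: L_eq_in => [[a [u1 u2]]] /hst /= [c1 c2].
rewrite /Gphi /= !count_cat /= c1 c2 addn1 addn0 !eqxx !andbT mul1r cats1.
case: (u1 =P v) => [->|_]; last by case: ifP; rewrite ?mulr0.
rewrite pend_counts c1 c2 phi_rcons_F.
by rewrite addn0 eqxx /=; case: ifP; rewrite ?mul0r ?mul1r.
Qed.

Lemma E6 v j : L (Gp v s t.+1) (mulx [:: (1, (j, [:: false]))] z) =
  (if j == v then Q hm q j s else 0) * cc (ord_pred j).
Proof.
rewrite L_1mulx mul1r /cc -L_scal; apply: L_eq_in => [[a [u1 u2]]] _ /=.
rewrite /Gphi /= add1n eqSS add0n.
have -> : pend (j, [:: false]) = ord_pred j by [].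
case: (ord_pred j =P u1) => [<-|nju].
  rewrite phi_F eqxx; case: (j == v); rewrite ?mul0r //=.
  by case: ifP => /andP; [case=> /eqP -> _; rewrite mulrC|rewrite mulr0].
case: (u1 =P ord_pred j) => [e|_] /=; first by case: nju.
by rewrite mulr0.
Qed.

End Cent.

Lemma L_NF (K : fieldType) m (hm : (0 < m)%N) (q : 'I_m -> K) z s t G :
  (forall e, e \in z -> count id e.2.2 = s /\ count negb e.2.2 = t) ->
  L G (NF hm q z) = \sum_(v : 'I_m) cc hm q z s t v * G (v, nfw s t).
Proof.
move=> hst; rewrite /L /NF big_map.
under [RHS]eq_bigr do rewrite /cc /L mulr_suml.
rewrite exchange_big /= [LHS]big_seq [RHS]big_seq.
apply: eq_bigr => [[a [u1 u2]]] /hst /= [c1 c2].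
rewrite c1 c2 (bigD1 u1) //= big1 ?addr0 /Gphi /= ?c1 ?c2 ?eqxx //= ?mulrA //.
by move=> v /negbTE nv; rewrite eq_sym nv /= mulr0 mul0r.
Qed.

Lemma iter_ordS_val m k (v : 'I_m) : val (iter k (@ordS m) v) = ((v + k) %% m)%N.
Proof.
elim: k => [|k IH] /=; first by rewrite addn0 modn_small.
by rewrite IH -addn1 modnDml addn1 addnS.
Qed.

Lemma iterSP m k (v : 'I_m) : iter k (@ordS m) (iter k (@ord_pred m) v) = v.
Proof.
elim: k => [|k IH] //=.
by rewrite (iter_comm _ _ (fun y => ordS_pred_comm y)) ord_predK IH.
Qed.

Lemma iter_ordS_eq m s t (v : 'I_m) :
  (iter s (@ordS m) v = iter t (@ordS m) v) <-> (s = t %[mod m])%N.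
Proof.
split=> [h|h].
  have := congr1 val h; rewrite !iter_ordS_val => /eqP; rewrite eqn_modDl => /eqP //.
by apply: val_inj; rewrite !iter_ordS_val -modnDmr h modnDmr.
Qed.

Lemma endv_mod m (v : 'I_m) s t : (s = t %[mod m])%N -> endv v s t = v.
Proof.
move=> h; rewrite /endv; have /iter_ordS_eq -> := h.
  exact: iterSP.
Qed.

Lemma endv_eq m (v : 'I_m) s t : endv v s t = v -> (s = t %[mod m])%N.
Proof.
move=> h; apply/(iter_ordS_eq s t v).
by rewrite -[in RHS]h /endv -iterD addnC iterD iterSP.
Qed.

Lemma prodN_seq (K : fieldType) (r : seq nat) (F : nat -> K) :
  \prod_(i <- r) - F i = (-1) ^+ size r * \prod_(i <- r) F i.
Proof.
elim: r => [|a r IH]; first by rewrite !big_nil mul1r.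
by rewrite !big_cons IH /= exprS -(mulN1r (F a)) mulrACA.
Qed.

Section Form.
Variables (K : fieldType) (m : nat) (hm : (0 < m)%N) (q : 'I_m -> K).
Hypothesis hq : forall i, q i != 0.
Local Notation qq := (qq hm q).

Lemma vtxS i : vtx hm i.+1 = ordS (vtx hm i).
Proof. by apply: val_inj; rewrite /= -[((i %% m).+1)%N]addn1 modnDml addn1. Qed.

Lemma vtx_val (v : 'I_m) : vtx hm v = v.
Proof. by apply: val_inj; rewrite /= modn_small. Qed.

Lemma qq_vtx i j : qq (vtx hm i + j) = qq (i + j).
Proof. by apply: qq_mod; rewrite /= modnDml. Qed.

Lemma size_ii a : size (index_iota 1 a.+1) = a.
Proof. by rewrite /index_iota size_iota subSS subn0. Qed.

Lemma rec_a n s t i : n = (s + t)%N ->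
  (-1) ^+ n * P hm q (vtx hm i) t = (-1) ^+ s * (\prod_(1 <= l < t.+1) qq (i + l))^-1.
Proof.
move=> ->; rewrite /P prodN_seq size_ii exprD -mulrA; congr (_ * _).
rewrite mulrA sign_sq mul1r -prodfV; apply: eq_bigr => l _; by rewrite qq_vtx.
Qed.

Lemma rec_b n s t i : n = (s + t)%N ->
  (-1) ^+ n * Q hm q (ordS (vtx hm i)) s = (-1) ^+ t * (\prod_(1 <= l < s.+1) qq (i + l))^-1.
Proof.
have sz : size (index_iota 0 s) = s by rewrite /index_iota size_iota subn0.
move=> ->; rewrite /Q prodN_seq sz addnC exprD -mulrA; congr (_ * _).
rewrite mulrA sign_sq mul1r -prodfV big_add1 /=; apply: eq_bigr => l _.
by apply: congr1; apply: qq_mod; rewrite modnDml addSnnS modnDml.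
Qed.

Lemma formula a b (cn : nat -> K) :
  (forall i, cn i.+1 = (-1) ^+ a * (\prod_(1 <= l < b.+1) qq (i + l))^-1 * cn i) ->
  forall i, cn i = (-1) ^+ (i * a) * \prod_(1 <= k < i.+1) (\prod_(k <= j < k + b) qq j)^-1 * cn 0.
Proof.
move=> h; elim=> [|i IH]; first by rewrite mul0n expr0 big_geq // !mul1r.
rewrite h IH [\prod_(1 <= k < i.+2) _]big_nat_recr //= mulSn exprD.
have -> : \prod_(i.+1 <= j < i.+1 + b) qq j = \prod_(1 <= l < b.+1) qq (i + l).
  rewrite -{1}[i.+1]add1n big_addn.
  have -> : (i.+1 + b - i = b.+1)%N by rewrite addSn -addnS addKn.
  by apply: eq_bigr => l _; rewrite addnC.
set X := (\prod_(1 <= l < b.+1) qq (i + l))^-1.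
rewrite !mulrA; congr (_ * _).
by rewrite (mulrAC _ X) (mulrAC _ X).
Qed.

Lemma periodic a : \prod_(0 <= k < m) qq (k + a) = zeta q.
Proof.
elim: a => [|a IH].
  rewrite /zeta big_mkord; apply: eq_bigr => i _; by rewrite addn0 qq_ord.
set f := fun k => qq (k + a).
have e1 : \prod_(0 <= k < m) qq (k + a.+1) = \prod_(0 <= k < m) f k.+1.
  by apply: eq_bigr => k _; rewrite /f addnS addSn.
have e2 : \prod_(0 <= k < m.+1) f k = f 0 * \prod_(0 <= k < m) f k.+1.
  by rewrite big_nat_recl.
rewrite big_nat_recr //= in e2.
have fm : f m = f 0 by rewrite /f add0n; apply: qq_mod; rewrite modnDl.
rewrite fm -/f IH mulrC in e2.
have nz : f 0 != 0 by exact: qq_neq0.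
by rewrite e1; apply: (mulfI nz); rewrite -e2.
Qed.

Lemma prod_zeta b : \prod_(1 <= k < m.+1) \prod_(k <= j < k + b) qq j = zeta q ^+ b.
Proof.
have e : forall k, \prod_(k <= j < k + b) qq j = \prod_(0 <= l < b) qq (l + k).
  by move=> k; rewrite -{1}[k]add0n big_addn addKn.
under eq_bigr do rewrite e.
rewrite exchange_big /=.
rewrite (eq_bigr (fun _ => zeta q)); first by rewrite prodr_const_nat subn0.
move=> l _; rewrite big_add1 /= -(periodic l.+1); apply: eq_bigr => k _.
by rewrite !addnS addnC.
Qed.

Lemma zeta_eq a b (cn : nat -> K) :
  (forall i, cn i.+1 = (-1) ^+ a * (\prod_(1 <= l < b.+1) qq (i + l))^-1 * cn i) ->
  cn m = cn 0 -> cn 0 != 0 -> zeta q ^+ b = (-1) ^+ (m * a).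
Proof.
move=> h hm0 nz; have := formula h m; rewrite hm0 prodfV prod_zeta.
set X := (-1) ^+ (m * a) * _ => e.
have X1 : X = 1.
  apply/eqP; rewrite -subr_eq0; apply/eqP; apply: (mulIf nz).
  by rewrite mul0r mulrBl mul1r -e subrr.
move: X1; rewrite /X; case: (eqVneq (zeta q ^+ b) 0) => [->|nz2].
  by rewrite invr0 mulr0 => /eqP; rewrite eq_sym oner_eq0.
move=> e2; have := congr1 (fun x => x * zeta q ^+ b) e2; by rewrite /= mulfVK // mul1r => ->.
Qed.

End Form.

Lemma nat_two (a b s t : nat) : (a + b = s + t)%N -> (a + t = s + b)%N -> a = s /\ b = t.
Proof. rewrite -!plusE. lia. Qed.
Lemma int_nat (a b s t : nat) : (a%:Z - b%:Z = s%:Z - t%:Z) -> (a + t = s + b)%N.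
Proof. move=> h. apply/eqP; rewrite -eqz_nat !PoszD -[Posz a](subrK (Posz b)) h addrAC subrK //. Qed.

Unset Implicit Arguments.
Set Strict Implicit.

Theorem mainTheorem3 (K : fieldType) (m : nat) (hm : (0 < m)%N)
    (q : 'I_m -> K) (hq : forall i, q i != 0)
    (z : kq K m) (n : nat) (d : int)
    (hn : len_homog n z) (hd : zhomog d z)
    (hc : graded_central q n z) (hz : ~ eq_in_E q z [::]) :
  exists (s t : nat) (c0 : K),
    [/\ s = t %[mod m], c0 != 0,
        eq_in_E q z (flatten [seq scalex (coef_c hm q s t c0 i)
                                     (mulx (gam K hm i s) (del K hm i t))
                         | i <- iota 0 m]),
        (forall i : nat, (i < m)%N ->
           coef_c hm q s t c0 i =
           (-1) ^+ (i * t) *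
             \prod_(1 <= k < i.+1) (\prod_(k <= j < k + s) qq hm q j)^-1 * c0)
      & zeta q ^+ s = (-1) ^+ (m * t) /\ zeta q ^+ t = (-1) ^+ (m * s)].
Proof.
case: z hn hd hc hz => [|e0 z'] hn hd hc hz.
  by exfalso; apply: hz; exact: (eqE_refl q [::]).
set z := e0 :: z' in hn hd hc hz *.
set s := count id e0.2.2; set t := count negb e0.2.2.
have hsz : forall e, e \in z -> size e.2.2 = n /\ zdeg e.2.2 = d.
  by move=> e he; split; [exact: (eqP (allP hn e he)) | exact: (eqP (allP hd e he))].
have cnt : forall w : seq bool, (count id w + count negb w = size w)%N.
  by move=> w; rewrite -(count_predC id w); congr (_ + _)%N; apply: eq_count.
have hst : forall e, e \in z -> count id e.2.2 = s /\ count negb e.2.2 = t.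
  move=> e he; have [h1 h2] := hsz e he; have [h3 h4] := hsz e0 (mem_head _ _).
  rewrite -h4 /zdeg in h2; apply: nat_two; last exact: int_nat.
  by rewrite !cnt h1 h3.
have Ez : eqE q z (NF hm q z) := nf_list hm q z.
have LNF := fun G => L_NF hm q G hst.
set c := cc hm q z s t in LNF.
have ex : exists v, c v != 0.
  case: (pickP (fun v => c v != 0)) => [v hv|h0]; first by exists v.
  exfalso; apply: hz; apply: (eqE_Leq _ _ Ez) => G //.
  rewrite LNF L_nil big1 // => v _; have := h0 v; move=> /= /negbFE /eqP ->.
  by rewrite mul0r.
have Rend : forall v, c v != 0 -> endv v s t = v.
  move=> v nz; have h := Phi_eqE hm v s t (hc 0 [:: (1, (endv v s t, [::]))] isT).
  rewrite L_scale (E1 hm q hst) (E2 hm q z s t) muln0 expr0 mul1r eqxx mul1r -/c in h.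
  by move: h; case: eqP => // _; rewrite mul0r => h; rewrite h eqxx in nz.
have [v0 nz0] := ex.
have smt : s = t %[mod m] := endv_eq (Rend v0 nz0).
have endv_id : forall v, endv v s t = v := fun v => endv_mod v smt.
have nst : n = (s + t)%N by have [h1 _] := hsz e0 (mem_head _ _); rewrite -h1 -cnt.
have Ra : forall j, c (ordS j) = (-1) ^+ n * P hm q j t * c j.
  move=> j; have h := Phi_eqE hm j s.+1 t (hc 1 [:: (1, (j, [:: true]))] isT).
  rewrite L_scale (E3 hm q hst) (E4 hm q z s t) endv_id !eqxx mul1r muln1 -/c in h.
  by rewrite -mulrA h mulrA sign_sq mul1r.
have Rb : forall j, c (ordS j) = (-1) ^+ n * Q hm q (ordS j) s * c j.
  move=> j; have h := Phi_eqE hm (ordS j) s t.+1 (hc 1 [:: (1, (ordS j, [:: false]))] isT).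
  rewrite L_scale (E5 hm q hst) (E6 hm q z s t) endv_id !eqxx ordSK mul1r muln1 -/c in h.
  by rewrite h mulrA.
pose cn := fun i => c (vtx hm i).
have ha : forall i, cn i.+1 = (-1) ^+ s * (\prod_(1 <= l < t.+1) qq hm q (i + l))^-1 * cn i.
  by move=> i; rewrite /cn vtxS Ra (rec_a hm q i nst).
have hb : forall i, cn i.+1 = (-1) ^+ t * (\prod_(1 <= l < s.+1) qq hm q (i + l))^-1 * cn i.
  by move=> i; rewrite /cn vtxS Rb (rec_b hm q i nst).
have fa := formula ha; have fb := formula hb.
have cm : cn m = cn 0 by rewrite /cn; congr c; apply: val_inj; rewrite /= modnn mod0n.
have c0nz : cn 0 != 0.
  apply/negP => /eqP c00; move: nz0; rewrite -(vtx_val hm v0) -/(cn v0) fa c00 mulr0.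
  by rewrite eqxx.
exists s, t, (cn 0); split.
- exact: smt.
- exact: c0nz.
- apply: (eqE_Leq _ _ Ez) => G //.
  rewrite LNF L_flatten.
  have hp : forall i, pend (vtx hm i, nseq s true) = vtx hm (i + t).
    move=> i; apply: val_inj; rewrite pend_counts /endv !count_nseq /= mul1n.
    by rewrite iter_ordS_val /= modnDml -modnDmr smt modnDmr.
  rewrite (eq_bigr (fun i => cn i * G (vtx hm i, nfw s t))); last first.
    move=> i _; rewrite L_scale /gam /del (mulx11 1 1 (nseq t false) (hp i)).
    by rewrite L_cons L_nil addr0 !mul1r /coef_c -fa.
  have -> : iota 0 m = index_iota 0 m by rewrite /index_iota subn0.
  by rewrite big_mkord; apply: eq_bigr => v _; rewrite /cn vtx_val.
- by move=> i _; rewrite /coef_c -fa fb.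
- by split; [exact: (zeta_eq hq hb cm c0nz) | exact: (zeta_eq hq ha cm c0nz)].
Qed.
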